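(* Let $n\ge 3$ and consider the Markov chain on $\{0,1,\dots,n-1\}$ with $n\times n$ transition probability matrix $\mathbf P=(P_{ij})$ given by: $P_{00}=5/6$, $P_{01}=1/6$; $P_{10}=5/6$, $P_{12}=1/6$; for $2\le i\le n-2$: $P_{i0}=2/3$, $P_{i,i-1}=1/6$, $P_{i,i+1}=1/6$; $P_{n-1,0}=1/3$, $P_{n-1,n-2}=1/6$, $P_{n-1,n-1}=1/2$; all other entries $0$. Then the steady state probability vector $\vec\pi=(\pi_0,\dots,\pi_{n-1})$ (the unique probability vector with $\vec\pi=\vec\pi\mathbf P$) is given by $$\pi_i=\frac{C_{n-1-i}}{\sum_{l=0}^{n-1}C_l},\qquad i=0,1,\dots,n-1.$$
   Context: The Lucas-balancing numbers $C_m$ are defined by $C_0=1$, $C_1=3$, $C_{m+1}=6C_m-C_{m-1}$ (equivalently $C_m=\sqrt{8B_m^2+1}$ where $B_m$ are the balancing numbers $B_0=0,B_1=1,B_{m+1}=6B_m-B_{m-1}$). *)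

(* Defs.v *)
From mathcomp Require Import all_boot all_order all_algebra.
Set Implicit Arguments. Unset Strict Implicit. Unset Printing Implicit Defensive.
Import Order.TTheory GRing.Theory Num.Theory.
Local Open Scope ring_scope.

Fixpoint lucas_bal (m : nat) : int :=
  match m with
  | 0%N => 1
  | S p => match p with
           | 0%N => 3
           | S q => 6 * lucas_bal p - lucas_bal q
           end
  end.

Definition Pentry (R : realFieldType) (n i j : nat) : R :=
  if (i == 0)%N then
    (if (j == 0)%N then 5%:R / 6%:R else if (j == 1)%N then 1 / 6%:R else 0)
  else if (i == 1)%N then
    (if (j == 0)%N then 5%:R / 6%:R else if (j == 2)%N then 1 / 6%:R else 0)
  else if (i == n.-1)%N then
    (if (j == 0)%N then 1 / 3%:R
     else if (j == n.-2)%N then 1 / 6%:R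
     else if (j == n.-1)%N then 1 / 2%:R else 0)
  else
    (if (j == 0)%N then 2%:R / 3%:R
     else if (j == i.-1)%N then 1 / 6%:R
     else if (j == i.+1)%N then 1 / 6%:R else 0).

Definition Pmat (R : realFieldType) (n : nat) : 'M[R]_n :=
  \matrix_(i < n, j < n) Pentry R n i j.

Definition prob_vec (R : realFieldType) (n : nat) (q : 'rV[R]_n) : Prop :=
  (forall i, 0 <= q 0 i) /\ \sum_(i < n) q 0 i = 1.

Definition pi_formula (R : realFieldType) (n : nat) : 'rV[R]_n :=
  \row_(i < n) ((lucas_bal (n.-1 - i))%:~R / (\sum_(l < n) (lucas_bal l)%:~R)).

(* Main.v *)
Require Import Defs.
From mathcomp Require Import all_boot all_order all_algebra.
From mathcomp Require Import zify ring lra.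
Import Order.TTheory GRing.Theory Num.Theory.
Local Open Scope ring_scope.
Set Implicit Arguments.

Ltac pent := rewrite /Pentry /=; repeat (case: eqP => ? /=); try (exfalso; lia); try by [].

Ltac pentf := rewrite /Pentry /=; repeat (case: eqP => ? /=); try (exfalso; lia); try field.

Lemma sum3 (R : realFieldType) n (F : 'I_n.+1 -> R) (a b c : nat) :
  (a <= n)%N -> (b <= n)%N -> (c <= n)%N -> a <> b -> a <> c -> b <> c ->
  (forall i : 'I_n.+1, (i : nat) <> a -> (i : nat) <> b -> (i : nat) <> c -> F i = 0) ->
  \sum_i F i = F (inord a) + F (inord b) + F (inord c).
Proof.
move=> ha hb hc ab ac bc H.
rewrite (bigD1 (inord a)) //= (bigD1 (inord b)) /=; last first.
  by rewrite -val_eqE /= !inordK //; lia.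
rewrite (bigD1 (inord c)) /=; last first.
  by rewrite -!val_eqE /= !inordK //; lia.
rewrite big1 ?addr0 ?addrA // => i; rewrite -!val_eqE /= !inordK // => hi.
apply: H; lia.
Qed.

Lemma col_mid (R : realFieldType) n (q : 'rV[R]_n.+1) j :
  (2 <= n)%N -> (1 <= j)%N -> (j <= n.-1)%N ->
  (q *m Pmat R n.+1) 0 (inord j) = 1/6%:R * q 0 (inord j.-1) + 1/6%:R * q 0 (inord j.+1).
Proof.
move=> hn h1 h2; rewrite mxE.
have hj : (j < n.+1)%N by lia.
under eq_bigr do rewrite mxE (inordK hj).
rewrite (@sum3 _ _ _ j.-1 j.+1 j); try lia.
  rewrite !inordK; try lia.
  have -> : Pentry R n.+1 j.-1 j = 1/6%:R by pent.
  have -> : Pentry R n.+1 j.+1 j = 1/6%:R by pent.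
  have -> : Pentry R n.+1 j j = 0 by pent.
  by rewrite mulr0 addr0 !(mulrC (q 0 _)).
move=> i *. have -> : Pentry R n.+1 i j = 0 by pent.
by rewrite mulr0.
Qed.

Lemma col_last (R : realFieldType) n (q : 'rV[R]_n.+1) :
  (2 <= n)%N ->
  (q *m Pmat R n.+1) 0 (inord n) = 1/6%:R * q 0 (inord n.-1) + 1/2%:R * q 0 (inord n).
Proof.
move=> hn; rewrite mxE.
have hj : (n < n.+1)%N by lia.
under eq_bigr do rewrite mxE (inordK hj).
rewrite (@sum3 _ _ _ n.-1 n 0); try lia.
  rewrite !inordK; try lia.
  have -> : Pentry R n.+1 n.-1 n = 1/6%:R by pent.
  have -> : Pentry R n.+1 n n = 1/2%:R by pent.
  have -> : Pentry R n.+1 0 n = 0.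
 pent.
  by rewrite mulr0 addr0 !(mulrC (q 0 _)).
move=> i *. have := ltn_ord i => ?. have -> : Pentry R n.+1 i n = 0 by pent.
by rewrite mulr0.
Qed.

Lemma row_sum (R : realFieldType) n i :
  (2 <= n)%N -> (i <= n)%N -> \sum_(j < n.+1) Pentry R n.+1 i j = 1.
Proof.
move=> hn hi.
have [a [b [c [ha [hb [hc [ab [ac [bc [H E]]]]]]]]]] : exists a b c : nat,
  (a <= n)%N /\ (b <= n)%N /\ (c <= n)%N /\ a <> b /\ a <> c /\ b <> c /\
  (forall j : nat, j <> a -> j <> b -> j <> c -> Pentry R n.+1 i j = 0) /\
  Pentry R n.+1 i a + Pentry R n.+1 i b + Pentry R n.+1 i c = 1.
  case: (i =P 0%N) => [->|i0].
    exists 0%N, 1%N, 2%N; do 6 (split; first lia); split; first by move=> j *; pent.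
    by pentf.
  case: (i =P 1%N) => [->|i1].
    exists 0%N, 2%N, 1%N; do 6 (split; first lia); split; first by move=> j *; pent.
    by pentf.
  case: (i =P n) => [->|iN].
    exists 0%N, n.-1, n; do 6 (split; first lia); split; first by move=> j *; pent.
    by pentf.
  exists 0%N, i.-1, i.+1; do 6 (split; first lia); split; first by move=> j *; pent.
  by pentf.
rewrite (@sum3 _ _ _ a b c) // ?inordK //.
by move=> j *; apply: H.
Qed.


Lemma lb_rec m : lucas_bal m.+2 = 6 * lucas_bal m.+1 - lucas_bal m.
Proof. by []. Qed.

Lemma lb_pos m : (1 <= lucas_bal m <= lucas_bal m.+1)%R.
Proof.
elim: m => [|m /andP [h1 h2]]; first by [].
rewrite lb_rec; apply/andP; split; lia.
Qed.

Definition cc (R : realFieldType) m : R := (lucas_bal m)%:~R.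

Lemma cc_rec (R : realFieldType) m : cc R m.+2 = 6 * cc R m.+1 - cc R m.
Proof. by rewrite /cc lb_rec intrB intrM. Qed.

Lemma cc_pos (R : realFieldType) m : 0 < cc R m.
Proof. rewrite /cc ltr0z; have /andP [h _] := lb_pos m; lia. Qed.

Lemma sum_rev (R : realFieldType) n :
  \sum_(i < n.+1) cc R (n - i) = \sum_(l < n.+1) cc R l.
Proof.
rewrite (reindex_inj rev_ord_inj) /=; apply: eq_bigr => i _.
by rewrite subSS subKn // -ltnS.
Qed.

Lemma sum_stat (R : realFieldType) n (q : 'rV[R]_n.+1) : (2 <= n)%N ->
  (forall j : 'I_n.+1, j != ord0 -> (q *m Pmat R n.+1) 0 j = q 0 j) ->
  (q *m Pmat R n.+1) 0 ord0 = q 0 ord0.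
Proof.
move=> hn H.
have E : \sum_j (q *m Pmat R n.+1) 0 j = \sum_j q 0 j.
  under eq_bigr do rewrite mxE.
  rewrite exchange_big /=; apply: eq_bigr => i _.
  under eq_bigr do rewrite mxE.
  by rewrite -mulr_sumr row_sum // ?mulr1 // -ltnS.
move: E; rewrite (bigD1 ord0) //= [in RHS](bigD1 ord0) //=.
rewrite (eq_bigr (fun j => q 0 j)); last by move=> j; apply: H.
by move/addIr.
Qed.

Lemma pi_at (R : realFieldType) n k : (k <= n)%N ->
  pi_formula R n.+1 0 (inord k) = cc R (n - k) / \sum_(l < n.+1) cc R l.
Proof. by move=> hk; rewrite mxE inordK. Qed.

Lemma ord_inord n (j : 'I_n.+1) : j = inord j.
Proof. by rewrite inord_val. Qed.

Theorem main_n (R : realFieldType) (n : nat) (hn : (2 <= n)%N) :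
  prob_vec (pi_formula R n.+1) /\ pi_formula R n.+1 *m Pmat R n.+1 = pi_formula R n.+1 /\
  (forall q : 'rV[R]_n.+1, prob_vec q -> q *m Pmat R n.+1 = q -> q = pi_formula R n.+1).
Proof.
set S := \sum_(l < n.+1) cc R l.
have Spos : 0 < S.
  rewrite /S (bigD1 ord0) //= ltr_wpDr ?cc_pos //.
  by apply: sumr_ge0 => i _; apply: ltW; apply: cc_pos.
have S0 : S != 0 by rewrite gt_eqF.
have piE : forall j : 'I_n.+1, pi_formula R n.+1 0 j = cc R (n - j) / S.
  by move=> j; rewrite mxE.
split.
  split.
    by move=> i; rewrite piE divr_ge0 // ltW // cc_pos.
  under eq_bigr do rewrite piE.
  by rewrite -mulr_suml sum_rev divff.
split.
  apply/rowP => j; rewrite [j]ord_inord.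
  have hj := ltn_ord j.
  have Hnz : forall k, (1 <= k <= n)%N ->
     (pi_formula R n.+1 *m Pmat R n.+1) 0 (inord k) = pi_formula R n.+1 0 (inord k).
    move=> k /andP [k1 k2].
    case: (k =P n) => [->|kn].
      rewrite col_last // !pi_at // ?leq_pred // subnn.
      have -> : (n - n.-1 = 1)%N by lia.
      rewrite /cc /=; by field.
    rewrite col_mid //; last lia.
    rewrite !pi_at; try lia.
    have -> : (n - k.-1 = (n - k.+1).+2)%N by lia.
    have -> : (n - k = (n - k.+1).+1)%N by lia.
    rewrite cc_rec; by field.
  case: (nat_of_ord j =P 0%N) => [j0|j0]; last first.
    apply: Hnz; lia.
  have -> : inord j = ord0 :> 'I_n.+1 by apply: val_inj; rewrite /= inordK.
  apply: sum_stat => // k k0.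
  rewrite [k]ord_inord; apply: Hnz.
  have := ltn_ord k; move: k0; rewrite -val_eqE /=; lia.
move=> q [q0 q1] qs.
pose g (k : nat) : R := q 0 (inord (n - k)).
have colq : forall k, (1 <= k <= n.-1)%N ->
    q 0 (inord k) = 1/6%:R * q 0 (inord k.-1) + 1/6%:R * q 0 (inord k.+1).
  move=> k /andP [k1 k2]; by have := @col_mid _ _ q k hn k1 k2; rewrite qs.
have colql : q 0 (inord n) = 1/6%:R * q 0 (inord n.-1) + 1/2%:R * q 0 (inord n).
  by have := @col_last _ _ q hn; rewrite qs.
have G : forall k, (k < n)%N -> g k = g 0%N * cc R k /\ g k.+1 = g 0%N * cc R k.+1.
  elim => [_|k IH hk].
    rewrite /g /cc /= mulr1 subn0; split => //.
    have -> : (n - 1 = n.-1)%N by lia.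
    move: colql; set a := q 0 (inord n.-1); set b := q 0 (inord n) => e.
    rewrite -[3%:~R]/(3%:R : R); lra.
  have [IH1 IH2] := IH (ltnW hk); split => //.
  have E := colq (n - k.+1)%N ltac:(lia).
  have e1 : ((n - k.+1).-1 = n - k.+2)%N by lia.
  have e2 : ((n - k.+1).+1 = n - k)%N by lia.
  rewrite e1 e2 in E.
  change (g k.+1 = 1/6%:R * g k.+2 + 1/6%:R * g k) in E.
  have -> : g k.+2 = 6%:R * g k.+1 - g k by lra.
  rewrite IH1 IH2 cc_rec; ring.
have qE : forall i : 'I_n.+1, q 0 i = g 0%N * cc R (n - i).
  move=> i; rewrite [i]ord_inord inordK //.
  have hi := ltn_ord i.
  case: (nat_of_ord i =P 0%N) => [->|i0].
    have hn1 : (n.-1 < n)%N by lia.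
    have [_ h] := G _ hn1.
    rewrite prednK in h; last lia.
    by rewrite subn0 -h /g subnn.
  have hn1 : ((n - i) < n)%N by lia.
  have [h _] := G _ hn1.
  rewrite /g in h *; rewrite -h; congr (q 0 (inord _)); lia.
have g0E : g 0%N = 1 / S.
  move: q1; under eq_bigr do rewrite qE.
  rewrite -mulr_sumr sum_rev -/S => h.
  by rewrite -h mulfK.
apply/rowP => j; rewrite qE piE g0E; by rewrite mulrC mul1r.
Qed.

Unset Implicit Arguments.

Theorem theorem3p1 (R : realFieldType) (n : nat) (hn : (3 <= n)%N) :
  prob_vec (pi_formula R n) /\ pi_formula R n *m Pmat R n = pi_formula R n /\
  (forall q : 'rV[R]_n, prob_vec q -> q *m Pmat R n = q -> q = pi_formula R n).
Proof.
case: n hn => [|n] hn; first by [].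
by apply: main_n.
Qed.
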